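(* Let $H$ be the tournament on vertex set $\{u,v,w,a,b,c,d\}$ with edges $u\to v$, $u\to w$, $w\to v$, $u\to c$, $u\to d$, $v\to c$, $v\to d$, $a\to u$, $b\to u$, $a\to v$, $b\to v$, $a\to b$, $c\to d$, $c\to a$, $c\to b$, $d\to a$, $d\to b$, $w\to a$, $b\to w$, $w\to c$, $d\to w$. Then: (1) $H$ has a proper $2$-coloring in which $u$ and $v$ have the same color and all vertices of $N^-(u)\cup N^+(v)$ have the other color; (2) in every proper $2$-coloring of $H$, $u$ and $v$ have the same color.
   Context: A proper $2$-coloring of a tournament is a partition of its vertex set into $2$ sets each inducing an acyclic (transitive) subtournament, i.e. a $2$-coloring with no monochromatic cyclic triangle. $N^+(x)=\{y: x\to y\}$ and $N^-(x)=\{y: y\to x\}$. *)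

(* Defs.v *)
From mathcomp Require Import all_boot.
Set Implicit Arguments. Unset Strict Implicit. Unset Printing Implicit Defensive.

Definition V := 'I_7.
Definition u : V := @Ordinal 7 0 isT.
Definition v : V := @Ordinal 7 1 isT.
Definition w : V := @Ordinal 7 2 isT.
Definition a : V := @Ordinal 7 3 isT.
Definition b : V := @Ordinal 7 4 isT.
Definition c : V := @Ordinal 7 5 isT.
Definition d : V := @Ordinal 7 6 isT.

Definition H_arcs : seq (V * V) :=
  [:: (u,v); (u,w); (w,v); (u,c); (u,d); (v,c); (v,d); (a,u); (b,u);
      (a,v); (b,v); (a,b); (c,d); (c,a); (c,b); (d,a); (d,b); (w,a);
      (b,w); (w,c); (d,w)].

Definition H : rel V := fun x y => (x, y) \in H_arcs.

Definition cyclic_triangle (T : finType) (E : rel T) (x y z : T) : bool :=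
  [&& E x y, E y z & E z x].

Definition proper_2coloring (T : finType) (E : rel T) (col : T -> bool) : Prop :=
  forall x y z : T, cyclic_triangle E x y z -> ~ (col x = col y /\ col y = col z).

Definition Nin (T : finType) (E : rel T) (x : T) : {set T} := [set y | E y x].
Definition Nout (T : finType) (E : rel T) (x : T) : {set T} := [set y | E x y].

(* Main.v *)
Require Import Defs.
From mathcomp Require Import all_boot.

Lemma part1 : proper_2coloring H (fun x : V => 3 <= x).
Proof.
move=> x y z.
case: x => -[|[|[|[|[|[|[|m]]]]]]] Hx //;
case: y => -[|[|[|[|[|[|[|m']]]]]]] Hy //;
case: z => -[|[|[|[|[|[|[|m'']]]]]]] Hz //;
rewrite /cyclic_triangle /H /=; by [] || (by move=> _ []).
Qed.

Theorem proposition5p3 :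
  (exists col : V -> bool,
      [/\ proper_2coloring H col,
          col u = col v &
          forall x, x \in Nin H u :|: Nout H v -> col x <> col u])
  /\
  (forall col : V -> bool, proper_2coloring H col -> col u = col v).
Proof.
split.
  exists (fun x : V => 3 <= x); split => //.
    exact: part1.
  move=> x; rewrite !inE /H /=.
  by case: x => -[|[|[|[|[|[|[|m]]]]]]] //= Hm.
move=> col P.
have T := fun x y z (h : cyclic_triangle H x y z) => P x y z h.
have t1 := T a u w isT. have t2 := T a u c isT. have t3 := T a u d isT.
have t4 := T a v c isT. have t5 := T a v d isT. have t6 := T a b w isT.
have t7 := T b u c isT. have t8 := T b u d isT. have t9 := T b v c isT.
have t10 := T b v d isT. have t11 := T b w c isT. have t12 := T c d w isT.
have t13 := T d w v isT.
move: t1 t2 t3 t4 t5 t6 t7 t8 t9 t10 t11 t12 t13.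
case: (col u); case: (col v); case: (col w); case: (col a); case: (col b);
  case: (col c); case: (col d); try done; intros;
  exfalso; (solve [ match goal with h : ~ (?p /\ ?q) |- _ => apply: h; split; reflexivity end ]).
Qed.
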